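(* Let $G=(V,E,\mathcal{W})$ be a matrix-weighted network as described in the context. Then $G$ is coherent if and only if there is a partition $\{V_1,\dots,V_{l_p}\}$ of $V$ such that (i) every edge $(v_i,v_j)\in E$ with $v_i,v_j$ in the same part has transformation $\mathbf{R}_{ij}=\mathbf{I}$; (ii) for every ordered pair of parts $(V_a,V_b)$, all edges $(v_i,v_j)\in E$ with $v_i\in V_a$, $v_j\in V_b$ have the same transformation $\mathbf{R}_{ij}$; and (iii) considering each part as a super node, joined by a directed edge from $V_a$ to $V_b$ ($a\ne b$) carrying this common transformation whenever such edges exist, the transformation of every directed cycle of super nodes is $\mathbf{I}$.
   Context: A matrix-weighted network (MWN) is $G=(V,E,\mathcal{W})$ with node set $V=\{v_1,\dots,v_n\}$ and edge set $E\subset V\times V$, whose underlying graph is connected. For a fixed dimension $n_d$, each ordered pair $(i,j)$ carries a matrix $\mathbf{W}_{ij}\in\mathbb{R}^{n_d\times n_d}$, with $\mathbf{W}_{ij}=0$ if and only if $(v_i,v_j)\notin E$, and $\mathbf{W}_{ij}=\mathbf{W}_{ji}^T$ for all $i,j$. Write $w_{ij}=\|\mathbf{W}_{ij}\|_2$ and, for edges, $\mathbf{R}_{ij}=\mathbf{W}_{ij}/w_{ij}$, the transformation of the edge $(v_i,v_j)$; $\mathbf{I}$ denotes the $n_d\times n_d$ identity. The transformation of a directed path or directed cycle with consecutive edges $e_1,\dots,e_k$ is the product $\mathbf{R}(e_1)\mathbf{R}(e_2)\cdots\mathbf{R}(e_k)$; a directed cycle is a sequence of edges $(v_{i_1},v_{i_2}),(v_{i_2},v_{i_3}),\dots,(v_{i_l},v_{i_1})\in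 E$ ($l\ge 2$, $v_{i_1},\dots,v_{i_l}$ distinct), with transformation $\mathbf{R}_{i_1i_2}\mathbf{R}_{i_2i_3}\cdots\mathbf{R}_{i_li_1}$. The MWN $G$ is called coherent if the transformation of every directed cycle is $\mathbf{I}$ (in particular, taking 2-cycles, all $\mathbf{R}_{ij}$ are then orthogonal). *)

(* Defs.v *)
From HB Require Import structures.
From mathcomp Require Import all_boot all_order all_algebra.
From mathcomp Require Import boolp classical_sets reals.
Set Implicit Arguments. Unset Strict Implicit. Unset Printing Implicit Defensive.
Import Order.TTheory GRing.Theory Num.Theory.
Local Open Scope ring_scope.

Section MWN.
Variables (R : realType) (n nd : nat).

Definition vnorm2 (x : 'cV[R]_nd) : R := Num.sqrt (\sum_(i < nd) x i 0 ^+ 2).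

Definition spec_norm (M : 'M[R]_nd) : R :=
  sup [set r : R | exists x : 'cV[R]_nd, vnorm2 x <= 1 /\ r = vnorm2 (M *m x)].

Variable W : 'I_n -> 'I_n -> 'M[R]_nd.

Definition mwn_edge : rel 'I_n := fun i j => W i j != 0.

Definition mwn_w (i j : 'I_n) : R := spec_norm (W i j).
Definition mwn_R (i j : 'I_n) : 'M[R]_nd := (mwn_w i j)^-1 *: W i j.

End MWN.

Definition is_dcycle (T : eqType) (e : rel T) (s : seq T) : bool :=
  [&& uniq s, (1 < size s)%N & cycle e s].

Definition cycle_pairs (T : Type) (s : seq T) : seq (T * T) :=
  if s is x :: s' then zip s (rcons s' x) else [::].

Definition cycle_transf (R : ringType) (nd : nat) (T : Type)
    (Rf : T -> T -> 'M[R]_nd) (s : seq T) : 'M[R]_nd :=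
  foldr (fun p M => Rf p.1 p.2 *m M) 1%:M (cycle_pairs s).

Definition coherent (R : realType) (n nd : nat) (W : 'I_n -> 'I_n -> 'M[R]_nd) : Prop :=
  forall s : seq 'I_n, is_dcycle (mwn_edge W) s -> cycle_transf (mwn_R W) s = 1%:M.

Definition super_edge (n : nat) (e : rel 'I_n) : rel {set 'I_n} :=
  fun A B => (A != B) && [exists ij : 'I_n * 'I_n, [&& ij.1 \in A, ij.2 \in B & e ij.1 ij.2]].

(* The transformation carried by the super edge A -> B: the transformation of
   some edge from A to B (well-defined under condition (ii)). *)
Definition super_R (R : realType) (n nd : nat) (W : 'I_n -> 'I_n -> 'M[R]_nd)
    (A B : {set 'I_n}) : 'M[R]_nd :=
  match [pick ij : 'I_n * 'I_n | [&& ij.1 \in A, ij.2 \in B & mwn_edge W ij.1 ij.2]] with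
  | Some ij => mwn_R W ij.1 ij.2
  | None => 0
  end.

(* Main.v *)
Require Import Defs.
From HB Require Import structures.
From mathcomp Require Import all_boot all_order all_algebra.
From mathcomp Require Import reals.
From mathcomp Require Import zify.
Import Order.TTheory GRing.Theory Num.Theory.
Local Open Scope ring_scope.
Set Implicit Arguments. Unset Strict Implicit.

Section Gen.
Variables (K : ringType) (nd : nat) (T : eqType) (f : T -> T -> 'M[K]_nd).

Fixpoint pp (a : T) (l : seq T) : 'M[K]_nd :=
  if l is b :: l' then f a b *m pp b l' else 1%:M.

Lemma pp_cat a l1 l2 : pp a (l1 ++ l2) = pp a l1 *m pp (last a l1) l2.
Proof.
elim: l1 a => [|b l1 IH] a /=; first by rewrite mul1mx.
by rewrite IH mulmxA.
Qed.

Lemma ct_pp a l : cycle_transf f (a :: l) = pp a (rcons l a).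
Proof.
rewrite /cycle_transf /cycle_pairs.
suff H : forall c a, foldr (fun p M => f p.1 p.2 *m M) 1%:M (zip (a :: l) (rcons l c))
   = pp a (rcons l c) by apply: H.
elim: l => [|b l IH] c a0 //=.
by rewrite -IH.
Qed.

Lemma notuniq_split (l : seq T) : ~~ uniq l -> exists x b y z, l = x ++ b :: y ++ b :: z.
Proof.
elim: l => [|c l IH] //=.
rewrite negb_and negbK; case/orP => [cl | /IH [x [b [y [z ->]]]]].
- by case/splitPr: cl => y z; exists [::], c, y, z.
- by exists (c :: x), b, y, z.
Qed.

Variables (e : rel T) (Q : pred T).
Hypothesis f1 : forall x, f x x = 1%:M.
Hypothesis Hcyc : forall a l, all Q (a :: l) -> uniq (a :: l) -> l != [::] ->
  path e a (rcons l a) -> pp a (rcons l a) = 1%:M.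

Lemma closed_walk k : forall a l, (size l <= k)%N -> all Q (a :: l) -> path e a l ->
  last a l = a -> pp a l = 1%:M.
Proof.
elim: k => [|k IH] a l.
  by case: l.
move=> Hs HQ Hp Hl.
case Hu: (uniq l).
  move: Hs HQ Hp Hu Hl; case/lastP: l => [|l' c] //.
  rewrite last_rcons => Hs HQ Hp Hu Hl; subst c.
  case: l' Hs HQ Hp Hu => [|c l'] Hs HQ Hp Hu.
    by rewrite /= f1 mulmx1.
  apply: Hcyc => //.
  - by move: HQ; rewrite /= all_rcons => /andP[_ /andP[-> /andP[->]]].
  - by move: Hu; rewrite rcons_uniq /= => /andP[-> ->].
have [x [b [y [z El]]]] := notuniq_split (negbT Hu).
subst l.
move: Hs HQ Hp Hl.
rewrite -cat_rcons -cat_rcons.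
rewrite !size_cat !size_rcons => Hs HQ Hp Hl.
move: HQ; rewrite /= !all_cat !all_rcons => /andP[Qa /and3P[/andP[Qb Qx] /andP[_ Qy] Qz]].
move: Hp; rewrite !cat_path !last_rcons => /and3P[Px Py Pz].
move: Hl; rewrite !last_cat !last_rcons => Hl.
rewrite !pp_cat !last_rcons.
rewrite (IH b (rcons y b)) ?mulmx1 ?last_rcons //; last first.
- by rewrite /= all_rcons Qb Qy.

- rewrite size_rcons; move: Hs; clear; lia.
rewrite mul1mx.
have -> : pp a (rcons x b) *m pp b z = pp a (rcons x b ++ z) by rewrite pp_cat last_rcons.
apply: IH.
- rewrite size_cat size_rcons; move: Hs; clear; lia.
- by rewrite /= all_cat all_rcons Qa Qb Qx Qz.
- by rewrite cat_path last_rcons Px Pz.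
- by rewrite last_cat last_rcons.
Qed.
End Gen.

Section Main.
Variables (R : realType) (n nd : nat) (W : 'I_n -> 'I_n -> 'M[R]_nd).
Hypothesis Wloop : forall i, W i i = 0.

Local Notation E := (mwn_edge W).

Section Back.
Variable P : {set {set 'I_n}}.
Hypothesis Hpart : finset.partition P [set: 'I_n].
Hypothesis H1 : forall A, A \in P -> forall i j, i \in A -> j \in A ->
           mwn_edge W i j -> mwn_R W i j = 1%:M.
Hypothesis H2 : forall A B, A \in P -> B \in P -> forall i j i' j',
           i \in A -> j \in B -> i' \in A -> j' \in B ->
           mwn_edge W i j -> mwn_edge W i' j' -> mwn_R W i j = mwn_R W i' j'.
Hypothesis H3 : forall S : seq {set 'I_n}, {subset S <= P} ->
           is_dcycle (super_edge (mwn_edge W)) S ->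
           cycle_transf (super_R W) S = 1%:M.

Let part := pblock P.
Lemma cov v : v \in cover P.
Proof. by case/and3P: Hpart => /eqP -> _ _; rewrite inE. Qed.
Lemma partP v : part v \in P.
Proof. exact: pblock_mem (cov v). Qed.
Lemma in_part v : v \in part v.
Proof. by rewrite mem_pblock cov. Qed.

Definition g (A B : {set 'I_n}) : 'M[R]_nd := if A == B then 1%:M else super_R W A B.
Definition e' (A B : {set 'I_n}) : bool := (A == B) || super_edge E A B.

Lemma Rg i j : E i j -> mwn_R W i j = g (part i) (part j).
Proof.
move=> Eij; rewrite /g; case: eqP => [Eq|NE].
  by apply: (@H1 _ (partP i)) => //; rewrite ?in_part // Eq in_part.
rewrite /super_R; case: pickP => [[i' j'] /and3P[Hi Hj He] | N].
  by apply: (@H2 _ _ (partP i) (partP j)); rewrite ?in_part.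
by have := N (i, j); rewrite /= !in_part Eij.
Qed.

Lemma Ee' i j : E i j -> e' (part i) (part j).
Proof.
move=> Eij; rewrite /e'; case: eqP => //= /eqP NE.
rewrite /super_edge NE /=; apply/existsP; exists (i, j).
by rewrite /= !in_part Eij.
Qed.

Lemma walk_map a L : path E a L ->
  path e' (part a) (map part L) /\ pp (mwn_R W) a L = pp g (part a) (map part L).
Proof.
elim: L a => [|b L IH] a //= /andP[Eab Hp].
have [H4 H5] := IH b Hp.
by rewrite Ee' // H4 H5 (Rg Eab).
Qed.

Lemma L1 A L : uniq (A :: L) -> path e' A L ->
  path (super_edge E) A L /\ pp g A L = pp (super_R W) A L.
Proof.
elim: L A => [|B L IH] A //= /andP[HA Hu] /andP[HAB Hp].
have NAB : A != B by apply: contra HA => /eqP ->; rewrite inE eqxx.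
have [H4 H5] := IH B Hu Hp.
rewrite H4 H5 /g (negbTE NAB) andbT; split => //.
by move: HAB; rewrite /e' (negbTE NAB).
Qed.

Lemma Hcyc' A L : all (mem P) (A :: L) -> uniq (A :: L) -> L != [::] ->
  path e' A (rcons L A) -> pp g A (rcons L A) = 1%:M.
Proof.
move=> HQ Hu HL Hp.
have Hsub : {subset (A :: L) <= P} by move=> X HX; exact: (allP HQ X HX).
move: Hp; rewrite -cats1 cat_path pp_cat => /andP[Hp Hl].
have [H4 H5] := L1 Hu Hp.
have NCA : last A L != A.
  move: HL Hu; case/lastP: L {Hsub HQ Hp Hl H4 H5} => [|L0 C] //= _.
  rewrite last_rcons mem_rcons inE negb_or => /andP[/andP[NAC _] _].
  by rewrite eq_sym.
have SE : super_edge E (last A L) A by move: Hl; rewrite /= /e' (negbTE NCA) andbT.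
have := H3 Hsub.
rewrite ct_pp /is_dcycle Hu /= -cats1 cat_path H4 /= SE pp_cat H5 /= /g (negbTE NCA).
case: L HL {Hu Hsub HQ Hp Hl H4 H5 NCA SE} => // X L _ /=.
by move=> ->.
Qed.

Lemma back : coherent W.
Proof.
move=> [|a l] // /and3P[_ _ Hc].
rewrite ct_pp.
have [Hp ->] := walk_map Hc.
apply: (closed_walk (e := e') (Q := mem P) _ _ (k := size (rcons l a))).
- by move=> x; rewrite /g eqxx.
- exact: Hcyc'.
- by rewrite size_map.
- apply/allP => A; rewrite -map_cons => /mapP [v _ ->]; exact: partP.
- exact: Hp.
- by rewrite last_map last_rcons.
Qed.
End Back.


Section Fwd.
Hypothesis Hcoh : coherent W.
Local Notation P := (preim_partition (@id 'I_n) [set: 'I_n]).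

Lemma Pform A : A \in P -> exists x, forall y, (y \in A) = (x == y).
Proof.
rewrite /preim_partition /equivalence_partition.
move=> HA; case/imsetP: HA => x _ ->; exists x => y.
by rewrite !inE.
Qed.

Lemma Psing A i j : A \in P -> i \in A -> j \in A -> i = j.
Proof.
by case/Pform => x Hx; rewrite !Hx => /eqP <- /eqP.
Qed.

Section Rep.
Variable x0 : 'I_n.
Definition rep (A : {set 'I_n}) := odflt x0 [pick y in A].
Lemma rep_in A : A \in P -> rep A \in A.
Proof.
move=> HA; have [x Hx] := Pform HA.
rewrite /rep; case: pickP => [y //|N].
by have := N x; rewrite Hx eqxx.
Qed.
Lemma rep_eq A i : A \in P -> i \in A -> i = rep A.
Proof. by move=> HA Hi; apply: (Psing HA Hi (rep_in HA)). Qed.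
Lemma rep_inj A B : A \in P -> B \in P -> rep A = rep B -> A = B.
Proof.
move=> HA HB Er; have [x Hx] := Pform HA; have [y Hy] := Pform HB.
have xa : x = rep A by apply/eqP; rewrite -Hx rep_in.
have yb : y = rep B by apply/eqP; rewrite -Hy rep_in.
by apply/setP => z; rewrite Hx Hy xa yb Er.
Qed.

Lemma walk_rep A L : all (mem P) (A :: L) -> path (super_edge E) A L ->
  path E (rep A) (map rep L) /\ pp (super_R W) A L = pp (mwn_R W) (rep A) (map rep L).
Proof.
elim: L A => [|B L IH] A //= /andP[HA /andP[HB HL]] /andP[SE Hp].
have [H4 H5] := IH B (introT andP (conj HB HL)) Hp.
move: SE => /andP[_ /existsP[[i j] /and3P[iA jB Eij]]] /=.
move: Eij; rewrite (rep_eq HA iA) (rep_eq HB jB) => Eij.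
rewrite Eij H4 H5; split => //.
rewrite /super_R; case: pickP => [[i' j'] /and3P[i'A j'B _]|N] /=.
  by rewrite /= in i'A j'B; rewrite (rep_eq HA i'A) (rep_eq HB j'B).
by have := N (rep A, rep B); rewrite /= !rep_in // Eij.
Qed.
End Rep.

Lemma fwd : exists P : {set {set 'I_n}},
    [/\ finset.partition P [set: 'I_n],
        (forall A, A \in P -> forall i j, i \in A -> j \in A ->
           mwn_edge W i j -> mwn_R W i j = 1%:M),
        (forall A B, A \in P -> B \in P -> forall i j i' j',
           i \in A -> j \in B -> i' \in A -> j' \in B ->
           mwn_edge W i j -> mwn_edge W i' j' -> mwn_R W i j = mwn_R W i' j')
      & (forall S : seq {set 'I_n}, {subset S <= P} ->
           is_dcycle (super_edge (mwn_edge W)) S ->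
           cycle_transf (super_R W) S = 1%:M)].
Proof.
exists P; split.
- exact: preim_partitionP.
- move=> A HA i j Hi Hj; rewrite (Psing HA Hi Hj) /mwn_edge Wloop.
  by rewrite eqxx.
- move=> A B HA HB i j i' j' Hi Hj Hi' Hj' _ _.
  by rewrite (Psing HA Hi Hi') (Psing HB Hj Hj').
- move=> [|A0 L] // Hsub /and3P[Hu Hs Hc].
  have HA0 : A0 \in P by apply: Hsub; rewrite inE eqxx.
  have [x0 _] := Pform HA0.
  have HQ : all (mem P) (A0 :: rcons L A0).
    apply/allP => X; rewrite /= inE mem_rcons inE orbA orbb => /orP[/eqP ->//|].
    by move=> XL; apply: Hsub; rewrite inE XL orbT.
  have [H4 H5] := walk_rep x0 HQ Hc.
  rewrite ct_pp H5 map_rcons -ct_pp; apply: Hcoh.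
  rewrite /is_dcycle /= size_map Hs /= -map_rcons H4 andbT.
  rewrite (_ : _ && _ = uniq (map (rep x0) (A0 :: L))) // map_inj_in_uniq // => X Y HX HY.
  by apply: rep_inj; apply: Hsub.
Qed.
End Fwd.

End Main.

Unset Implicit Arguments.

Theorem theorem1 (R : realType) (n nd : nat) (W : 'I_n -> 'I_n -> 'M[R]_nd)
  (Wsym : forall i j, W i j = (W j i)^T)
  (Wloop : forall i, W i i = 0)
  (Wconn : forall i j, connect (mwn_edge W) i j) :
  coherent W <->
  exists P : {set {set 'I_n}},
    [/\ finset.partition P [set: 'I_n],
        (forall A, A \in P -> forall i j, i \in A -> j \in A ->
           mwn_edge W i j -> mwn_R W i j = 1%:M),
        (forall A B, A \in P -> B \in P -> forall i j i' j',
           i \in A -> j \in B -> i' \in A -> j' \in B ->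
           mwn_edge W i j -> mwn_edge W i' j' -> mwn_R W i j = mwn_R W i' j')
      & (forall S : seq {set 'I_n}, {subset S <= P} ->
           is_dcycle (super_edge (mwn_edge W)) S ->
           cycle_transf (super_R W) S = 1%:M)].
Proof.
split.
- by move=> Hc; exact: fwd.
- by case=> P [Hp H1 H2 H3]; exact: (back Hp H1 H2 H3).
Qed.
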